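(* Let $\mathcal{A}$ be a totally negative $2$-Calabi–Yau Abelian category. Then the Ext-quiver of any $\Sigma$-collection in $\mathcal{A}$ is the double of a totally negative quiver.
   Context: $\mathcal{A}$ is a $\mathbf{C}$-linear Abelian category with finite-dimensional Ext spaces; it is $2$-Calabi–Yau in the sense that for all objects $M,N$ one has $\operatorname{Ext}^i(M,N)=0$ for $i\notin\{0,1,2\}$ and functorial nondegenerate pairings $\operatorname{Ext}^i(M,N)\otimes\operatorname{Ext}^{2-i}(N,M)\to\mathbf{C}$ (as induced by a right $2$-Calabi–Yau structure on a dg enhancement), so that $\operatorname{ext}^1(M,N)=\operatorname{ext}^1(N,M)$ and $\operatorname{ext}^1(M,M)$ is even. The Euler form is $(M,N)=\sum_i(-1)^i\dim\operatorname{Ext}^i(M,N)$, and $\mathcal{A}$ is totally negative if $(M,N)<0$ for all nonzero $M,N$. An object $\mathcal{F}$ is a $\Sigma$-object if $\dim\operatorname{Ext}^0(\mathcal{F},\mathcal{F})=\dim\operatorname{Ext}^2(\mathcal{F},\mathcal{F})=1$, $\dim\operatorname{Ext}^1(\mathcal{F},\mathcal{F})$ is even and $\operatorname{Ext}^i(\mathcal{F},\mathcal{F})=0$ otherwise; a $\Sigma$-collection is a finite set $\{\mathcal{F}_1,\dots,\mathcal{F}_r\}$ of $\Sigma$-objects with $\operatorname{Hom}(\mathcal{F}_m,\mathcal{F}_n)=0$ for $m\neq n$. Its Ext-quiver has vertices $\mathcal{F}_1,\dots,\mathcal{F}_r$ and $\dim\operatorname{Ext}^1(\mathcal{F}_i,\mathcal{F}_j)$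 arrows from $\mathcal{F}_i$ to $\mathcal{F}_j$. The double of a quiver $Q$ adds an opposite arrow for each arrow; a quiver is totally negative if every vertex carries at least two loops and any two distinct vertices are joined by at least one arrow. *)

(* Defs.v *)
From mathcomp Require Import all_boot all_order all_algebra.
Set Implicit Arguments. Unset Strict Implicit. Unset Printing Implicit Defensive.
Import GRing.Theory Num.Theory.

(* Abstract Ext-dimension data of a C-linear 2-Calabi-Yau Abelian category.
   Obj : objects; is_zero : zero objects; ext i M N = dim_C Ext^i(M,N).
   The axioms are facts valid in every such category. *)
Record CY2Data := {
  Obj : Type;
  is_zero : Obj -> Prop;
  ext : nat -> Obj -> Obj -> nat;
  zero_hom : forall M, is_zero M -> ext 0 M M = 0%N;
  ext_vanish : forall i M N, (2 < i)%N -> ext i M N = 0%N;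
  serre : forall i M N, (i <= 2)%N -> ext i M N = ext (2 - i) N M;
  ext1_self_even : forall M, ~~ odd (ext 1 M M)
}.

(* Euler form (M,N) = sum_i (-1)^i dim Ext^i(M,N) (only i = 0,1,2 can be nonzero) *)
Definition euler (A : CY2Data) (M N : Obj A) : int :=
  (\sum_(i < 3) (-1) ^+ i * (@ext A i M N)%:Z)%R.

Definition totally_negative_cat (A : CY2Data) : Prop :=
  forall M N : Obj A, ~ @is_zero A M -> ~ @is_zero A N -> (euler M N < 0)%R.

Definition sigma_object (A : CY2Data) (F : Obj A) : Prop :=
  [/\ @ext A 0 F F = 1%N, @ext A 2 F F = 1%N, ~~ odd (@ext A 1 F F)
    & forall i, (2 < i)%N -> @ext A i F F = 0%N].

Definition sigma_collection (A : CY2Data) (r : nat) (F : 'I_r -> Obj A) : Prop :=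
  (forall i, sigma_object (F i)) /\
  (forall m n, m != n -> @ext A 0 (F m) (F n) = 0%N).

(* A quiver on vertex set 'I_r, given by its numbers of arrows i -> j *)
Definition quiver (r : nat) := 'I_r -> 'I_r -> nat.

Definition ext_quiver (A : CY2Data) (r : nat) (F : 'I_r -> Obj A) : quiver r :=
  fun i j => @ext A 1 (F i) (F j).

(* double: add an opposite arrow for every arrow (a loop yields another loop) *)
Definition double_quiver (r : nat) (Q : quiver r) : quiver r :=
  fun i j => (Q i j + Q j i)%N.

Definition totally_negative_quiver (r : nat) (Q : quiver r) : Prop :=
  (forall i, (2 <= Q i i)%N) /\
  (forall i j, i != j -> (1 <= Q i j + Q j i)%N).

(* Main.v *)
Require Import Defs.
From mathcomp Require Import all_boot all_order all_algebra.
From mathcomp Require Import zify ring.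
Import GRing.Theory Num.Theory.

Lemma euler_eq (A : CY2Data) (M N : Obj A) :
  euler M N = ((ext 0 M N)%:Z - (ext 1 M N)%:Z + (ext 2 M N)%:Z)%R.
Proof.
rewrite /euler !big_ord_recr big_ord0 /= expr0 expr1 expr2.
ring.
Qed.

Theorem proposition7p1 (A : CY2Data) (HA : totally_negative_cat A)
  (r : nat) (F : 'I_r -> Obj A) (HF : sigma_collection F) :
  exists Q : quiver r, totally_negative_quiver Q /\
    (forall i j, ext_quiver F i j = double_quiver Q i j).
Proof.
case: HF => Hs H0.
have sym : forall i j, ext 1 (F i) (F j) = ext 1 (F j) (F i).
  by move=> i j; rewrite (@serre A 1).
have nz : forall i, ~ is_zero (F i).
  move=> i Hz; have := zero_hom Hz; case: (Hs i) => -> _ _ _; done.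
exists (fun i j : 'I_r => if (i < j)%N then ext 1 (F i) (F j)
              else if i == j then (ext 1 (F i) (F j))./2 else 0%N).
split; first split.
- move=> i; rewrite ltnn eqxx.
  have := HA _ _ (nz i) (nz i); rewrite euler_eq.
  case: (Hs i) => -> -> Hodd _.
  move: Hodd; set e := ext 1 (F i) (F i) => Hodd.
  move=> H.
  have He : (2 < e)%N by lia.
  have := odd_double_half e; rewrite (negbTE Hodd) add0n; lia.
- move=> i j nij.
  have := HA _ _ (nz i) (nz j); rewrite euler_eq.
  rewrite H0 // (@serre A 2) // subnn H0 1?eq_sym // add0r addr0.
  rewrite oppr_lt0 ltz_nat => Hp.
  case: (ltngtP i j) => [h|h|/val_inj h]; last by rewrite h eqxx in nij.
  + exact: leq_trans Hp (leq_addr _ _).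
  + by rewrite (sym j i); exact: leq_trans Hp (leq_addl _ _).
- move=> i j; rewrite /ext_quiver /double_quiver.
  case: (ltngtP i j) => [h|h|/val_inj h].
  + case: eqP => [e|_]; [by move: h; rewrite e ltnn | by rewrite addn0].
  + case: eqP => [e|_]; [by move: h; rewrite e ltnn | by rewrite add0n sym].
  + subst j; rewrite eqxx addnn.
    case: (Hs i) => _ _ Hodd _.
    by have := odd_double_half (ext 1 (F i) (F i)); rewrite (negbTE Hodd) add0n.
Qed.
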